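(* Let $\alpha>0$, $\Sigma_0$ a symmetric positive definite $d\times d$ matrix with symmetric positive definite square root $\Lambda_0=\Sigma_0^{1/2}$, and for symmetric positive definite $\Sigma$ define $\Psi(\Sigma)=\frac1{(1+\alpha)^{d/2}}|\Sigma|^{-\alpha/2}-\left(1+\frac1\alpha\right)|\Sigma|^{-\alpha/2}\left|I_d+\alpha\Lambda_0\Sigma^{-1}\Lambda_0\right|^{-1/2}$. Then $\Psi$ has a unique minimizer over the set of $d\times d$ symmetric positive definite matrices, namely $\Sigma^\star=\Lambda_0\Lambda_0=\Sigma_0$. *)

(* Defs.v *)
From mathcomp Require Import all_boot all_order all_algebra.
From mathcomp Require Import reals exp.
Set Implicit Arguments. Unset Strict Implicit. Unset Printing Implicit Defensive.
Import Order.TTheory GRing.Theory Num.Theory.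
Local Open Scope ring_scope.

Definition spd (R : realType) (d : nat) (A : 'M[R]_d) : Prop :=
  A^T = A /\ forall v : 'rV[R]_d, v != 0 -> 0 < (v *m A *m v^T) 0 0.

Definition Psi (R : realType) (d : nat) (alpha : R) (L0 S : 'M[R]_d) : R :=
  (powR (1 + alpha) (d%:R / 2))^-1 * powR (\det S) (- (alpha / 2))
  - (1 + alpha^-1) * powR (\det S) (- (alpha / 2))
      * powR (\det (1%:M + alpha *: (L0 *m invmx S *m L0))) (- (1 / 2)).

(* Main.v *)
Require Import Defs.
From mathcomp Require Import all_boot all_order all_algebra.
From mathcomp Require Import reals exp.
From mathcomp Require Import sequences.
From mathcomp Require Import spectral sesquilinear.
From mathcomp.real_closed Require Import complex.
From mathcomp Require Import ring lra.
Set Implicit Arguments. Unset Strict Implicit. Unset Printing Implicit Defensive.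
Import Order.TTheory GRing.Theory Num.Theory.
Local Open Scope ring_scope.

Section Spec.
Variable R : realType.
Local Notation C := (R[i]).
Local Open Scope sesquilinear_scope.
Definition cmx m n (A : 'M[R]_(m, n)) : 'M[C]_(m, n) := map_mx (real_complex R) A.

Lemma cmx_tC m n (A : 'M[R]_(m, n)) : (cmx A)^t* = cmx A^T.
Proof.
apply/matrixP => i j; rewrite !mxE /=.
by rewrite -[Num.conj _]/(conjc _); apply/eqP; rewrite eq_complex /= oppr0 !eqxx.
Qed.

Lemma decomp_c m n (u : 'M[C]_(m, n)) :
  u = cmx (map_mx (@complex.Re R) u) + 'i%C *: cmx (map_mx (@complex.Im R) u).
Proof.
apply/matrixP => i j; rewrite !mxE /=.
by case: (u i j) => a b; apply/eqP; rewrite eq_complex /= !mul0r !mulr0 !mul1r subrr addr0 add0r add0r !eqxx.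
Qed.


Lemma spd_ge0 d (M : 'M[R]_d) : spd M -> forall v : 'rV[R]_d, 0 <= (v *m M *m v^T) 0 0.
Proof.
move=> [_ H] v; have [->|vn0] := eqVneq v 0; last exact/ltW/H.
by rewrite !mul0mx mxE.
Qed.

Lemma tC_decomp m n (u : 'M[C]_(m, n)) :
  u^t* = cmx (map_mx (@complex.Re R) u)^T - 'i%C *: cmx (map_mx (@complex.Im R) u)^T.
Proof.
apply/matrixP => i j; rewrite !mxE /=.
rewrite -[Num.conj _]/(conjc _).
by case: (u j i) => x y; apply/eqP; rewrite eq_complex /=; apply/andP; split; apply/eqP; ring.
Qed.

Lemma qf_pos d (M : 'M[R]_d) : spd M -> forall u : 'rV[C]_d, u != 0 ->
  0 < (u *m cmx M *m u^t* ) 0 0.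
Proof.
move=> HM u un0.
set a := map_mx (@complex.Re R) u; set b := map_mx (@complex.Im R) u.
rewrite tC_decomp {1}(decomp_c u) -/a -/b.
rewrite !(mulmxDl, mulmxBr, mulmxDr, mulmxBl) -!scalemxAl -!scalemxAr !scalerA.
have E23 : (b *m M *m a^T) 0 0 = (a *m M *m b^T) 0 0.
  have -> : (b *m M *m a^T) 0 0 = ((b *m M *m a^T)^T) 0 0 by rewrite [RHS]mxE.
  by rewrite !trmx_mul trmxK HM.1 mulmxA.
rewrite /cmx -!map_mxM.
rewrite ![((_ + _ : 'M[C]_1) 0 0)]mxE ![((- _ : 'M[C]_1) 0 0)]mxE ![((_ *: _ : 'M[C]_1) 0 0)]mxE ![((map_mx _ _ : 'M[C]_1) 0 0)]mxE /=.
rewrite ?[((_ + _ : 'M[C]_1) 0 0)]mxE ?[((- _ : 'M[C]_1) 0 0)]mxE ?[((_ *: _ : 'M[C]_1) 0 0)]mxE ?[((map_mx _ _ : 'M[C]_1) 0 0)]mxE /=.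
rewrite E23.
set x1 := (a *m M *m a^T) 0 0; set y := (a *m M *m b^T) 0 0; set x2 := (b *m M *m b^T) 0 0.
have -> : x1%:C%C + 'i%C * y%:C%C - ('i%C * y%:C%C + ('i%C * 'i%C) * x2%:C%C) = (x1 + x2)%:C%C.
  by apply/eqP; rewrite eq_complex /=; apply/andP; split; apply/eqP; ring.
rewrite ltcE /= eqxx /=.
have h1 : 0 <= x1 by exact: spd_ge0.
have h2 : 0 <= x2 by exact: spd_ge0.
have [a0|an0] := eqVneq a 0.
  have [b0|bn0] := eqVneq b 0.
    by move: un0; rewrite (decomp_c u) -/a -/b a0 b0 /cmx !map_mx0 scaler0 addr0 eqxx.
  by apply: ltr_wpDl => //; apply: HM.2.
by apply: ltr_wpDr => //; apply: HM.2.
Qed.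

Lemma entry_row d (A B : 'M[C]_d) i :
  (A *m B *m A^t* ) i i = (row i A *m B *m (row i A)^t* ) 0 0.
Proof.
rewrite !mxE; apply: eq_bigr => k _; rewrite !mxE; congr (_ * _).
by apply: eq_bigr => l _; rewrite !mxE.
Qed.

Lemma spd_spec d (M : 'M[R]_d) : spd M -> exists (P : 'M[C]_d) (r : 'rV[R]_d),
  [/\ P \is unitarymx, forall i, 0 < r 0 i & cmx M = P^t* *m diag_mx (cmx r) *m P].
Proof.
move=> HM.
have Mn : cmx M \is normalmx.
  by apply/normalmxP; rewrite cmx_tC HM.1.
have /orthomx_spectralP E := Mn.
set P := spectralmx (cmx M) in E; set D := spectral_diag (cmx M) in E.
have PU : P \is unitarymx := spectral_unitarymx (cmx M).
have PPt : P *m P^t* = 1%:M by apply/unitarymxP.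
rewrite invmx_unitary // in E.
have PMP : P *m cmx M *m P^t* = diag_mx D.
  by rewrite E !mulmxA PPt mul1mx -mulmxA PPt mulmx1.
have Dpos : forall i, 0 < D 0 i.
  move=> i.
  have -> : D 0 i = (P *m cmx M *m P^t* ) i i by rewrite PMP mxE eqxx mulr1n.
  rewrite entry_row; apply: qf_pos => //.
  apply/eqP => r0.
  have := congr1 (fun X : 'M[C]_d => X i i) PPt.
  have -> : (P *m P^t* ) i i = (row i P *m (row i P)^t* ) 0 0.
    by rewrite !mxE; apply: eq_bigr => k _; rewrite !mxE.
  by rewrite r0 mul0mx /= !mxE eqxx /= => /eqP; rewrite eq_sym oner_eq0.
exists P, (map_mx (@complex.Re R) D); split => //.
  move=> i; have := Dpos i; rewrite mxE ltcE /=; by case/andP.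
rewrite E; congr (_ *m diag_mx _ *m _); apply/matrixP => i j; rewrite !mxE.
rewrite (ord1 i); have := Dpos j; rewrite ltcE /= => /andP[/eqP h _].
by move: h; case: (D 0 j) => [x y] /= h; apply/eqP; rewrite eq_complex /= h !eqxx.
Qed.

Lemma PtP d (P : 'M[C]_d) : P \is unitarymx -> P^t* *m P = 1%:M.
Proof. by move=> PU; rewrite -invmx_unitary // mulVmx // unitarymx_unit. Qed.

Lemma det_conj d (P : 'M[C]_d) (v : 'rV[C]_d) : P \is unitarymx ->
  \det (P^t* *m diag_mx v *m P) = \prod_i v 0 i.
Proof.
move=> PU; have PPt : P *m P^t* = 1%:M by apply/unitarymxP.
by rewrite !det_mulmx det_diag mulrC mulrA -det_mulmx PPt det1 mul1r.
Qed.

Lemma cmx1 d : cmx (1%:M : 'M[R]_d) = 1%:M.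
Proof. by rewrite /cmx map_scalar_mx rmorph1. Qed.

Lemma spd_key d (M : 'M[R]_d) (al : R) : spd M -> exists r : 'rV[R]_d,
  [/\ forall i, 0 < r 0 i, \det M = \prod_i r 0 i,
      \det (1%:M + al *: M) = \prod_i (1 + al * r 0 i)
     & ((forall i, r 0 i = 1) -> M = 1%:M)].
Proof.
move=> HM; have [P [r [PU rpos E]]] := spd_spec HM.
exists r; split => //.
- apply: (@complexI R); rewrite rmorph_prod -det_map_mx -/(cmx M) E det_conj //.
  by apply: eq_bigr => i _; rewrite mxE.
- apply: (@complexI R); rewrite rmorph_prod -det_map_mx -/(cmx _).
  have -> : cmx (1%:M + al *: M) = P^t* *m diag_mx (cmx (\row_i (1 + al * r 0 i))) *m P.
    rewrite /cmx map_mxD map_scalar_mx map_mxZ rmorph1 -/(cmx M) E.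
    have -> : diag_mx (cmx (\row_i (1 + al * r 0 i))) = 1%:M + (al%:C)%C *: diag_mx (cmx r).
      apply/matrixP => i j; rewrite !mxE.
      case: eqP => [->|_]; last by rewrite !mulr0n mulr0 addr0.
      by rewrite !mulr1n rmorphD rmorphM rmorph1.
    by rewrite mulmxDr mulmxDl mulmx1 PtP // -[in RHS]scalemxAr -[in RHS]scalemxAl.
  by rewrite det_conj //; apply: eq_bigr => i _; rewrite !mxE.
- move=> r1; apply: (map_mx_inj (f := real_complex R)).
  rewrite -/(cmx M) -/(cmx 1%:M) cmx1 E -[RHS](PtP PU); congr (_ *m _).
  have -> : diag_mx (cmx r) = 1%:M.
    apply/matrixP => i j; rewrite !mxE r1.
    by case: eqP => _; rewrite ?mulr1n ?mulr0n.
  by rewrite mulmx1.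
Qed.

End Spec.

Section Sc.
Variable R : realType.

Lemma key_gen (a t : R) (b : bool) : 0 < a ->
  (b -> t != 0) ->
  (if b then (1 + a) * expR (a * t) < 1 + a * expR ((1 + a) * t)
   else (1 + a) * expR (a * t) <= 1 + a * expR ((1 + a) * t)).
Proof.
move=> a0 hb.
have ey : expR ((1 + a) * t) = expR t * expR (a * t) by rewrite -expRD; congr expR; ring.
have e1y : expR (- (a * t)) * expR (a * t) = 1 by rewrite -expRD addNr expR0.
have y0 := expR_gt0 (a * t).
rewrite ey.
have h1 := expR_ge1Dx (- (a * t)). have h2 := expR_ge1Dx t.
set y := expR (a * t) in e1y y0 *; set e1 := expR (- (a * t)) in h1 e1y; set e2 := expR t in h2 *.
have q1 : (e1 - (1 - a * t)) * y = 1 - y + a * t * y.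
  by rewrite mulrBl e1y; ring.
have q2 : (e2 - (1 + t)) * (a * y) = a * (e2 * y) - a * y - a * t * y by ring.
case: b hb => [/(_ isT) tn0|_].
  have s1 : 1 + - (a * t) < e1 by apply: expR_gt1Dx; rewrite oppr_eq0 mulf_neq0 // gt_eqF.
  have s2 : 1 + t < e2 by apply: expR_gt1Dx.
  have p1 : 0 < (e1 - (1 - a * t)) * y by apply: mulr_gt0 => //; lra.
  have p2 : 0 < (e2 - (1 + t)) * (a * y) by apply: mulr_gt0; [lra | exact: mulr_gt0].
  rewrite q1 in p1; rewrite q2 in p2; lra.
have p1 : 0 <= (e1 - (1 - a * t)) * y by apply: mulr_ge0; lra.
have p2 : 0 <= (e2 - (1 + t)) * (a * y) by apply: mulr_ge0; [lra | apply: mulr_ge0; lra].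
rewrite q1 in p1; rewrite q2 in p2; lra.
Qed.

Lemma key_le (a t : R) : 0 < a -> (1 + a) * expR (a * t) <= 1 + a * expR ((1 + a) * t).
Proof. by move=> a0; apply: (@key_gen a t false a0). Qed.
Lemma key_lt (a t : R) : 0 < a -> t != 0 -> (1 + a) * expR (a * t) < 1 + a * expR ((1 + a) * t).
Proof. by move=> a0 tn0; apply: (@key_gen a t true a0). Qed.


Lemma g_gen (a r : R) (b : bool) : 0 < a -> 0 < r -> (b -> r != 1) ->
  (if b then 0 < ln (1 + a * r) - ln (1 + a) - a / (1 + a) * ln r
   else 0 <= ln (1 + a * r) - ln (1 + a) - a / (1 + a) * ln r).
Proof.
move=> a0 r0 hb.
have a1 : 1 + a != 0 by rewrite gt_eqF // ltr_wpDl // ltW.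
set t := ln r / (1 + a).
have e1 : (1 + a) * t = ln r by rewrite /t mulrC divfK.
have e2 : a * t = a / (1 + a) * ln r by rewrite /t mulrA mulrAC.
have pos1 : 0 < (1 + a) * expR (a * t) by apply: mulr_gt0; [lra | exact: expR_gt0].
have pos2 : 0 < 1 + a * r by apply: addr_gt0 => //; exact: mulr_gt0.
have lnL : ln ((1 + a) * expR (a * t)) = ln (1 + a) + a / (1 + a) * ln r.
  by rewrite lnM ?posrE ?expR_gt0 // ?expRK ?e2 //; lra.
case: b hb => [/(_ isT) rn1|_].
  have := key_lt (t:=t) a0.
  rewrite e1 lnK ?posrE // => /(_ _).
  have tn0 : t != 0.
    by rewrite /t mulf_eq0 negb_or invr_eq0 a1 andbT ln_eq0.
  move=> /(_ tn0) H.
  have : ln ((1 + a) * expR (a * t)) < ln (1 + a * r) by rewrite ltr_ln ?posrE.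
  by rewrite lnL; lra.
have := key_le t a0.
rewrite e1 lnK ?posrE // => H.
have : ln ((1 + a) * expR (a * t)) <= ln (1 + a * r) by rewrite ler_ln ?posrE.
by rewrite lnL; lra.
Qed.

Lemma main_sc (a t G : R) : 0 < a -> 0 <= G ->
  1 - (1 + a^-1) <= expR ((1 + a) * t) - (1 + a^-1) * expR (a * t - G / 2) /\
  (1 - (1 + a^-1) = expR ((1 + a) * t) - (1 + a^-1) * expR (a * t - G / 2) -> G = 0).
Proof.
move=> a0 G0.
have k0 : 0 < 1 + a^-1 by rewrite addr_gt0 // invr_gt0.
have ka : (1 + a^-1) * a = 1 + a by rewrite mulrDl mul1r mulVf ?gt_eqF // addrC.
have K := key_le t a0.
have le1 : expR (a * t - G / 2) <= expR (a * t) by rewrite ler_expR; lra.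
have base : 1 - (1 + a^-1) <= expR ((1 + a) * t) - (1 + a^-1) * expR (a * t).
  rewrite -subr_ge0.
  have -> : expR ((1 + a) * t) - (1 + a^-1) * expR (a * t) - (1 - (1 + a^-1)) =
    a^-1 * (1 + a * expR ((1 + a) * t) - (1 + a) * expR (a * t)).
    by field; rewrite gt_eqF.
  by apply: mulr_ge0; [rewrite invr_ge0 ltW | lra].
split.
  apply: (le_trans base); rewrite lerD2l lerN2; by rewrite ler_pM2l.
move=> E; apply/eqP; rewrite eq_le G0 andbT; apply/negP => /negP; rewrite -ltNge => Gp.
have lt1 : expR (a * t - G / 2) < expR (a * t) by rewrite ltr_expR; lra.
have : (1 + a^-1) * expR (a * t - G / 2) < (1 + a^-1) * expR (a * t) by rewrite ltr_pM2l.
lra.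
Qed.

End Sc.

Section Main.
Variables (R : realType) (d : nat) (al : R) (S0 L0 : 'M[R]_d).
Hypotheses (al0 : 0 < al) (HS0 : spd S0) (HL0 : spd L0) (LL : L0 *m L0 = S0).

Lemma spd_det_gt0 d' (X : 'M[R]_d') : spd X -> 0 < \det X.
Proof. by move=> HX; have [r [rp -> _ _]] := spd_key 0 HX; exact: prodr_gt0. Qed.

Lemma spd_unit d' (X : 'M[R]_d') : spd X -> X \in unitmx.
Proof. by move=> HX; rewrite unitmxE unitfE gt_eqF // spd_det_gt0. Qed.

Definition MT (T : 'M[R]_d) := L0 *m invmx T *m L0.

Lemma MT_spd T : spd T -> spd (MT T).
Proof.
move=> HT; have Tu := spd_unit HT; have Lu := spd_unit HL0.
split.
  by rewrite /MT !trmx_mul trmx_inv HT.1 HL0.1 mulmxA.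
move=> v vn0.
set z := v *m L0 *m invmx T.
have zn0 : z != 0.
  apply: contraNneq vn0 => z0.
  have <- : z *m T *m invmx L0 = v by rewrite /z mulmxKV // mulmxK.
  by rewrite z0 !mul0mx.
have -> : v *m MT T *m v^T = z *m T *m z^T.
  rewrite /z /MT !trmx_mul trmx_inv HT.1 HL0.1.
  by rewrite mulmxKV // !mulmxA.
exact: HT.2.
Qed.

Lemma MT_S0 : MT S0 = 1%:M.
Proof.
have h : invmx S0 *m L0 *m L0 = 1%:M by rewrite -mulmxA LL mulVmx // spd_unit.
by rewrite /MT -mulmxA; exact: (mulmx1C h).
Qed.

Lemma det_MT T : spd T -> \det T = \det S0 / \det (MT T).
Proof.
move=> HT; have T0 := spd_det_gt0 HT.
rewrite /MT !det_mulmx det_inv -LL det_mulmx.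
have L00 := spd_det_gt0 HL0.
by field; rewrite ?gt_eqF // mulf_neq0 ?invr_eq0 ?gt_eqF.
Qed.

Lemma powRE' (x p : R) : 0 < x -> powR x p = expR (p * ln x).
Proof. by move=> x0; rewrite /powR gt_eqF. Qed.

Lemma ln_prod n (f : 'I_n -> R) : (forall i, 0 < f i) ->
  ln (\prod_(i < n) f i) = \sum_(i < n) ln (f i).
Proof.
move=> fp; have -> : \prod_(i < n) f i = expR (\sum_(i < n) ln (f i)).
  by rewrite expR_sum; apply: eq_bigr => i _; rewrite lnK // posrE.
by rewrite expRK.
Qed.

Let k := 1 + al^-1.
Let l1 := ln (1 + al).
Let Z0 := - (al / 2) * ln (\det S0) - (d%:R / 2) * l1.

Lemma Psi_S0 : Psi al L0 S0 = expR Z0 * (1 - k).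
Proof.
rewrite /Psi -/(MT S0) MT_S0.
have -> : 1%:M + al *: 1%:M = (1 + al)%:M :> 'M[R]_d.
  by apply/matrixP => i j; rewrite !mxE; case: (i == j); rewrite ?mulr1n ?mulr0n ?mulr1 ?mulr0 ?addr0.
have a1 : 0 < 1 + al by rewrite addr_gt0.
have S00 := spd_det_gt0 HS0.
rewrite det_scalar !powRE' ?exprn_gt0 // lnXn // -/l1 -/k -[l1 *+ d]mulr_natl.
rewrite -expRN -expRD -mulrA -expRD mulrBr mulr1 [expR Z0 * k]mulrC.
by congr (expR _ - _ * expR _); rewrite /Z0; field.
Qed.

Lemma Psi_T T : spd T -> exists G t, [/\ 0 <= G, (G = 0 -> T = S0) &
  Psi al L0 T = expR Z0 * (expR ((1 + al) * t) - k * expR (al * t - G / 2))].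
Proof.
move=> HT; have HM := MT_spd HT.
have [r [rp dM dE r1]] := spd_key al HM.
pose g x := ln (1 + al * x) - ln (1 + al) - al / (1 + al) * ln x.
pose L := \sum_(i < d) ln (r 0 i).
pose G := \sum_(i < d) g (r 0 i).
have g0 : forall i, 0 <= g (r 0 i) by move=> i; apply: (@g_gen _ al (r 0 i) false).
exists G, (al * L / (2 * (1 + al))); split.
- by apply: sumr_ge0 => i _.
- move=> G0.
  have ri : forall i, r 0 i = 1.
    move=> i; have := psumr_eq0P (fun i _ => g0 i) G0 (i := i) isT.
    apply: contra_eq => rn1; apply/lt0r_neq0.
    exact: (@g_gen _ al (r 0 i) true al0 (rp i) (fun _ => rn1)).
  have h : L0 *m (invmx T *m L0) = 1%:M by rewrite mulmxA; exact: r1.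
  have h2 : invmx T *m S0 = 1%:M by rewrite -LL mulmxA; exact: (mulmx1C h).
  by rewrite -[T]mulmx1 -h2 mulmxA mulmxV ?mul1mx // spd_unit.
have a1 : 0 < 1 + al by rewrite addr_gt0.
have S00 := spd_det_gt0 HS0.
have M0 := spd_det_gt0 HM.
have T0 := spd_det_gt0 HT.
have E0 : 0 < \det (1%:M + al *: MT T).
  by rewrite dE; apply: prodr_gt0 => i _; apply: addr_gt0 => //; apply: mulr_gt0.
rewrite /Psi -/(MT T) !powRE' // -/l1 -/k.
have lnT : ln (\det T) = ln (\det S0) - L.
  by rewrite det_MT // ln_div ?posrE // dM ln_prod.
have lnE : ln (\det (1%:M + al *: MT T)) = G + d%:R * l1 + al / (1 + al) * L.
  rewrite dE ln_prod; last by move=> i; apply: addr_gt0 => //; apply: mulr_gt0.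
  have -> : d%:R * l1 = \sum_(i < d) l1 by rewrite sumr_const card_ord mulr_natl.
  rewrite /G /L mulr_sumr -!big_split /=; apply: eq_bigr => i _; rewrite /g /l1; ring.
rewrite lnT lnE.
rewrite /Z0 -expRN -expRD -mulrA -expRD [RHS]mulrBr -expRD [expR _ * (k * _)]mulrCA -expRD.
by congr (expR _ - _ * expR _); field; rewrite gt_eqF.
Qed.

Lemma core T : spd T -> Psi al L0 S0 <= Psi al L0 T /\ (Psi al L0 T = Psi al L0 S0 -> T = S0).
Proof.
move=> HT; have [G [t [G0 GT ->]]] := Psi_T HT.
rewrite Psi_S0; have [le eq] := main_sc t al0 G0.
split; first by rewrite ler_pM2l ?expR_gt0.
move=> E; apply: GT; apply: eq.
have hz : expR Z0 != 0 by rewrite gt_eqF ?expR_gt0.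
by apply: (mulfI hz); rewrite E.
Qed.

End Main.

Theorem lemma7 (R : realType) (d : nat) (alpha : R) (Sigma0 Lambda0 : 'M[R]_d) :
  0 < alpha -> spd Sigma0 -> spd Lambda0 -> Lambda0 *m Lambda0 = Sigma0 ->
  forall S : 'M[R]_d,
    (spd S /\ forall T : 'M[R]_d, spd T -> Psi alpha Lambda0 S <= Psi alpha Lambda0 T)
    <-> S = Sigma0.
Proof.
move=> a0 HS0 HL0 LL S; split.
  move=> [HS Hmin].
  have [H1 H2] := @core R d alpha Sigma0 Lambda0 a0 HS0 HL0 LL S HS.
  apply: H2; apply: le_anti; apply/andP; split; [exact: (Hmin Sigma0 HS0) | exact: H1].
move=> ->; split; first exact: HS0.
move=> T HT.
exact: (@core R d alpha Sigma0 Lambda0 a0 HS0 HL0 LL T HT).1.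
Qed.
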